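(* Suppose $P_{II*}\subseteq P_{II}$ is a chain (totally ordered by inclusion). Then $\mathcal C_{\Xi\text{-unc}}\neq\emptyset$ for every filter $\Xi\in P_{III*}$.
   Context: Let $n\ge1$, $L=\{1,\dots,n\}$, and for $i\in L$ let $\mathcal H_i$ be a Hilbert space with $1<\dim\mathcal H_i<\infty$; $\mathcal H_X=\bigotimes_{i\in X}\mathcal H_i$ and $\mathcal D_X$ is the set of density operators on $\mathcal H_X$. $P_I$ is the set of partitions of $L$ ordered by refinement. For $\xi\in P_I$, $\mathcal D_{\xi\text{-unc}}=\{\varrho\in\mathcal D_L:\varrho=\bigotimes_{X\in\xi}\varrho_X,\ \varrho_X\in\mathcal D_X\}$, and for $S\subseteq P_I$, $\mathcal D_{S\text{-unc}}=\bigcup_{\xi\in S}\mathcal D_{\xi\text{-unc}}$. $P_{II}$ is the set of nonempty down-sets of $P_I$, ordered by inclusion; $P_{II*}$ is a nonempty subset of $P_{II}$ and $P_{III*}$ is the set of nonempty up-sets of $P_{II*}$. For $\Xi\in P_{III*}$: $\overline\Xi=P_{II*}\setminus\Xi$ and $\mathcal C_{\Xi\text{-unc}}=\bigcap_{\boldsymbol\xi'\in\overline\Xi}(\mathcal D_L\setminus\mathcal D_{\boldsymbol\xi'\text{-unc}})\cap\bigcap_{\boldsymbol\xi\in\Xi}\mathcal D_{\boldsymbol\xi\text{-unc}}$. *)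

(* Defs.v *)
From HB Require Import structures.
From mathcomp Require Import all_boot all_order all_algebra.
Set Implicit Arguments. Unset Strict Implicit. Unset Printing Implicit Defensive.
Import Order.TTheory GRing.Theory Num.Theory.
Local Open Scope ring_scope.

(* The computational basis of H_X = (x)_{i in X} H_i is indexed by
   dependent functions assigning to each i in X a basis label in 'I_(d i). *)
Definition site (n : nat) (X : {set 'I_n}) := {i : 'I_n | i \in X}.

Definition basisX (n : nat) (d : 'I_n -> nat) (X : {set 'I_n}) :=
  {dffun forall j : site X, 'I_(d (val j))}.

Definition basisL (n : nat) (d : 'I_n -> nat) :=
  {dffun forall i : 'I_n, 'I_(d i)}.

Definition restr (n : nat) (d : 'I_n -> nat) (X : {set 'I_n}) (a : basisL d)
  : basisX d X := [ffun j : site X => a (val j)].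

(* A linear operator on a finite-dim Hilbert space with ON basis T,
   given by its matrix r a b = <a| r |b>.  Density operator: self-adjoint,
   positive semidefinite, trace one. *)
Definition density (C : numClosedFieldType) (T : finType) (r : T -> T -> C) : Prop :=
  (forall a b, r b a = (r a b)^*) /\
  (forall v : T -> C, 0 <= \sum_(a : T) \sum_(b : T) (v a)^* * r a b * v b) /\
  \sum_(a : T) r a a = 1.

Definition is_partition (n : nat) (xi : {set {set 'I_n}}) : bool :=
  partition xi [set: 'I_n].

Definition refines (n : nat) (ups xi : {set {set 'I_n}}) : bool :=
  [forall Y in ups, [exists X in xi, Y \subset X]].

(* D_{xi-unc}: states of the form (x)_{X in xi} rho_X with rho_X in D_X *)
Definition unc (C : numClosedFieldType) (n : nat) (d : 'I_n -> nat)
  (xi : {set {set 'I_n}}) (rho : basisL d -> basisL d -> C) : Prop :=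
  density rho /\
  exists rhoX : forall X : {set 'I_n}, basisX d X -> basisX d X -> C,
    (forall X, X \in xi -> density (rhoX X)) /\
    (forall a b, rho a b = \prod_(X in xi) rhoX X (restr X a) (restr X b)).

Definition uncS (C : numClosedFieldType) (n : nat) (d : 'I_n -> nat)
  (S : {set {set {set 'I_n}}}) (rho : basisL d -> basisL d -> C) : Prop :=
  exists2 xi, xi \in S & unc xi rho.

Definition in_PII (n : nat) (S : {set {set {set 'I_n}}}) : Prop :=
  (forall xi, xi \in S -> is_partition xi) /\
  S != set0 /\
  (forall xi ups, xi \in S -> is_partition ups -> refines ups xi -> ups \in S).

Definition C_unc (C : numClosedFieldType) (n : nat) (d : 'I_n -> nat)
  (PIIs Xi : {set {set {set {set 'I_n}}}}) (rho : basisL d -> basisL d -> C) : Prop :=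
  density rho /\
  (forall S', S' \in PIIs :\: Xi -> ~ uncS S' rho) /\
  (forall S, S \in Xi -> uncS S rho).

(* Main.v *)
Require Import Defs.
From HB Require Import structures.
From mathcomp Require Import all_boot all_order all_algebra.
Import Order.TTheory GRing.Theory Num.Theory.
Local Open Scope ring_scope.
Set Implicit Arguments. Unset Strict Implicit.

Lemma diag_density (C : numClosedFieldType) (T : finType) (p : T -> C) :
  (forall a, 0 <= p a) -> \sum_a p a = 1 ->
  density (fun a b => (a == b)%:R * p a).
Proof.
move=> hp hs; split; [|split].
- move=> a b; case: (eqVneq a b) => [->|nab].
    by rewrite mul1r geC0_conj.
  by rewrite !mul0r conjC0.
- move=> v; apply: sumr_ge0 => a _.
  rewrite (bigD1 a) //= big1 ?addr0 => [|b nba]; last first.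
    by rewrite eq_sym (negbTE nba) mul0r mulr0 mul0r.
  rewrite eqxx mul1r mulrAC; apply: mulr_ge0 => //.
  by rewrite mulrC mul_conjC_ge0.
- by under eq_bigr => a _ do rewrite eqxx mul1r.
Qed.

Lemma sum_delta (C : numClosedFieldType) (T : finType) (b : T) :
  \sum_(a : T) (a == b)%:R = 1 :> C.
Proof.
rewrite (bigD1 b) //= eqxx big1 ?addr0 // => a /negbTE -> //.
Qed.

Lemma foldr_const2 (T : Type) (s : seq T) :
  foldr muln 1%N [seq 2%N | _ <- s] = (2 ^ size s)%N.
Proof. by elim: s => //= x s ->; rewrite expnS. Qed.

Lemma foldr_constk (T : Type) (k : nat) (s : seq T) :
  foldr muln 1%N [seq k | _ <- s] = (k ^ size s)%N.
Proof. by elim: s => //= x s ->; rewrite expnS. Qed.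

Definition lab (n : nat) (d : 'I_n -> nat) (hd : forall i, (1 < d i)%N)
  (b : bool) (i : 'I_n) : 'I_(d i) :=
  if b then Ordinal (hd i) else Ordinal (ltnW (hd i)).

Lemma lab_inj n d hd i b1 b2 : @lab n d hd b1 i = @lab n d hd b2 i -> b1 = b2.
Proof. by case: b1; case: b2 => // /(congr1 val). Qed.

Definition cstX n d hd (X : {set 'I_n}) (t : bool) : basisX d X :=
  [ffun j : site X => @lab n d hd t (val j)].

Definition pX (C : numClosedFieldType) n d hd X (c : basisX d X) : C :=
  ((c == @cstX n d hd X false)%:R + (c == cstX hd X true)%:R) / 2.

Definition rhoL (C : numClosedFieldType) n d hd (xi : {set {set 'I_n}})
  (a b : basisL d) : C :=
  (a == b)%:R * \prod_(X in xi) @pX C n d hd X (restr X a).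

Lemma pX_ge0 C n d hd X c : 0 <= @pX C n d hd X c.
Proof. by rewrite /pX divr_ge0 // addr_ge0. Qed.

Lemma pX_sum C n d hd X : \sum_c @pX C n d hd X c = 1.
Proof.
rewrite /pX -mulr_suml big_split /= !sum_delta.
by rewrite -[1 + 1]/(2%:R) divff // pnatr_eq0.
Qed.

Definition af n d hd (xi : {set {set 'I_n}}) (f : {ffun {set 'I_n} -> bool})
  : basisL d := [ffun i => @lab n d hd (f (pblock xi i)) i].

Lemma prod_ind (C : numClosedFieldType) n d hd xi (f : {ffun {set 'I_n} -> bool})
  (a : basisL d) : is_partition xi ->
  \prod_(X in xi) ((restr X a == @cstX n d hd X (f X))%:R : C) = (a == af hd xi f)%:R.
Proof.
move=> /and3P [/eqP cov triv _].
case: (eqVneq a (af hd xi f)) => [->|ne].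
  apply: big1 => X Xin; apply/eqP; rewrite pnatr_eq1 eqb1.
  apply/eqP/ffunP => j; rewrite !ffunE (def_pblock triv Xin (valP j)) //.
have [i hi] : exists i, a i != af hd xi f i.
  apply/existsP; rewrite -negb_forall; apply: contra ne => /forallP h.
  by apply/eqP/ffunP => i; apply/eqP/h.
have icov : i \in cover xi by rewrite cov inE.
rewrite (bigD1 (pblock xi i)) ?pblock_mem //=.
case: eqP => [/ffunP h|_]; last by rewrite mul0r.
have := h (exist _ i (etrans (mem_pblock xi i) icov)).
by rewrite !ffunE /= => e; move: hi; rewrite e ffunE eqxx.
Qed.

Lemma trace_rhoL C n d hd xi : is_partition xi ->
  \sum_(a : basisL d) \prod_(X in xi) @pX C n d hd X (restr X a) = 1.
Proof.
move=> hxi.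
have e : forall a : basisL d, \prod_(X in xi) @pX C n d hd X (restr X a) =
   2^-1 ^+ #|xi| * \sum_(f in pfamily false (mem xi) (fun _ _ => true))
       \prod_(X in xi) ((restr X a == cstX hd X (f X))%:R : C).
  move=> a; rewrite (eq_bigr (fun X => 2^-1 * \sum_(t : bool) ((restr X a == cstX hd X t)%:R : C))); last first.
    by move=> X _; rewrite /pX big_bool /= mulrC addrC.
  by rewrite big_split /= prodr_const (big_distr_big_dep false).
under eq_bigr => a _ do rewrite e.
rewrite -mulr_sumr exchange_big /=.
under eq_bigr => f _ do rewrite (eq_bigr _ (fun a _ => prod_ind C hd f a hxi)) sum_delta.
rewrite sumr_const card_pfamily /image_mem foldr_constk -cardE.
rewrite [X in (X ^ _)%N]card_bool.
rewrite natrX -exprMn mulVf ?expr1n //.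
by rewrite pnatr_eq0.
Qed.

Lemma prod_restr_eq (C : numClosedFieldType) n (d : 'I_n -> nat) xi (a b : basisL d) :
  is_partition xi ->
  \prod_(X in xi) ((restr X a == restr X b)%:R : C) = (a == b)%:R.
Proof.
move=> /and3P [/eqP cov triv _].
case: (eqVneq a b) => [->|ne].
  by apply: big1 => X Xin; rewrite eqxx.
have [i hi] : exists i, a i != b i.
  apply/existsP; rewrite -negb_forall; apply: contra ne => /forallP h.
  by apply/eqP/ffunP => i; apply/eqP/h.
have icov : i \in cover xi by rewrite cov inE.
rewrite (bigD1 (pblock xi i)) ?pblock_mem //=.
case: eqP => [/ffunP h|_]; last by rewrite mul0r.
have := h (exist _ i (etrans (mem_pblock xi i) icov)).
by rewrite !ffunE /= => e; move: hi; rewrite e eqxx.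
Qed.

Lemma rhoL_density C n d hd xi : is_partition xi -> density (@rhoL C n d hd xi).
Proof.
move=> hxi; apply: diag_density; last exact: trace_rhoL.
by move=> a; apply: prodr_ge0 => X _; apply: pX_ge0.
Qed.

Lemma rhoL_unc C n d hd xi : is_partition xi -> unc xi (@rhoL C n d hd xi).
Proof.
move=> hxi; split; first exact: rhoL_density.
exists (fun X c c' => (c == c')%:R * @pX C n d hd X c); split.
  move=> X _; apply: diag_density; [exact: pX_ge0 | exact: pX_sum].
by move=> a b; rewrite /rhoL -(prod_restr_eq C a b hxi) -big_split.
Qed.

Definition ind n d hd (A : {set 'I_n}) : basisL d := [ffun i => @lab n d hd (i \in A) i].

Lemma restr_ind_cst n d hd (A Z : {set 'I_n}) t :
  (forall k, k \in Z -> (k \in A) = t) -> restr Z (ind hd A) = @cstX n d hd Z t.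
Proof. by move=> h; apply/ffunP => j; rewrite !ffunE h //= (valP j). Qed.

Lemma restr_ind_ncst n d hd (A Z : {set 'I_n}) t k :
  k \in Z -> (k \in A) != t -> restr Z (ind hd A) != @cstX n d hd Z t.
Proof.
move=> hk ht; apply/eqP => /ffunP /(_ (exist _ k hk)); rewrite !ffunE /=.
by move=> /lab_inj e; rewrite e eqxx in ht.
Qed.

Lemma restr_ind_eq n d hd (A B Y : {set 'I_n}) :
  A :&: Y = B :&: Y -> restr Y (@ind n d hd A) = restr Y (ind hd B).
Proof.
move=> /setP h; apply/ffunP => j; rewrite !ffunE.
by move: (h (val j)); rewrite !inE (valP j) !andbT => ->.
Qed.

Lemma pX_neq0 C n d hd X (c : basisX d X) t :
  c = @cstX n d hd X t -> @pX C n d hd X c != 0.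
Proof.
move=> ->; rewrite /pX mulf_neq0 ?invr_eq0 ?pnatr_eq0 //.
by case: t; rewrite eqxx -natrD pnatr_eq0 addn_eq0 //= andbF.
Qed.

Lemma pX_eq0 C n d hd X (c : basisX d X) :
  c != @cstX n d hd X false -> c != cstX hd X true -> @pX C n d hd X c = 0.
Proof. by move=> h1 h2; rewrite /pX (negbTE h1) (negbTE h2) addr0 mul0r. Qed.

Lemma rhoL_diag C n d hd xi a :
  @rhoL C n d hd xi a a = \prod_(X in xi) pX C hd (restr X a).
Proof. by rewrite /rhoL eqxx mul1r. Qed.

Lemma not_unc C n d hd xi ups :
  is_partition xi -> is_partition ups -> ~~ refines xi ups ->
  ~ unc ups (@rhoL C n d hd xi).
Proof.
move=> hxi hups nref [_ [sig [_ prodE]]].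
move: nref; rewrite /refines negb_forall => /existsP [X].
rewrite negb_imply => /andP [Xin /existsPn noY].
have /and3P [/eqP covx trivx nzx] := hxi.
have /and3P [/eqP covu trivu nzu] := hups.
have : X != set0 by apply: contraNneq nzx => <-.
case/set0Pn => i iX.
have icov : i \in cover ups by rewrite covu inE.
set Y1 := pblock ups i.
have Y1in : Y1 \in ups by exact: pblock_mem.
have iY1 : i \in Y1 by rewrite mem_pblock.
have : ~~ (X \subset Y1) by move: (noY Y1); rewrite Y1in.
case/subsetPn => j jX jY1.
set w := ind hd (X :&: Y1); set v := ind hd (X :\: Y1).
set z := ind hd set0; set u := ind hd X.
have key : rhoL C hd xi w w * rhoL C hd xi v v
         = rhoL C hd xi z z * rhoL C hd xi u u.
  rewrite !prodE -!big_split /=; apply: eq_bigr => Y Yin.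
  case: (eqVneq Y Y1) => [->|nY].
    rewrite [restr Y1 w](@restr_ind_eq _ _ _ _ X); last first.
      by apply/setP => k; rewrite !inE -andbA andbb.
    rewrite [restr Y1 v](@restr_ind_eq _ _ _ _ set0); last first.
      by apply/setP => k; rewrite !inE; case: (k \in Y1); rewrite ?andbF.
    by rewrite mulrC.
  have dk : forall k, k \in Y -> (k \in Y1) = false.
    move=> k kY; move: (trivIsetP trivu Y Y1 Yin Y1in nY).
    by rewrite -setI_eq0 => /eqP /setP /(_ k); rewrite !inE kY.
  rewrite [restr Y w](@restr_ind_eq _ _ _ _ set0); last first.
    by apply/setP => k; rewrite !inE; case kY: (k \in Y); rewrite ?andbF //= (dk k kY) andbF.
  rewrite [restr Y v](@restr_ind_eq _ _ _ _ X) //.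
  by apply/setP => k; rewrite !inE; case kY: (k \in Y); rewrite ?andbF // dk.
move: key; rewrite !rhoL_diag (bigD1 X Xin) /=.
rewrite (@pX_eq0 _ _ _ _ _ (restr X w)); first last.
- by apply: (@restr_ind_ncst _ _ _ _ _ _ j) => //; rewrite !inE jX (negbTE jY1).
- by apply: (@restr_ind_ncst _ _ _ _ _ _ i) => //; rewrite !inE iX iY1.
rewrite !mul0r => e.
have hz : \prod_(Z in xi) pX C hd (restr Z z) != 0.
  apply/prodf_neq0 => Z Zin.
  by apply: (@pX_neq0 _ _ _ _ _ _ false); apply: restr_ind_cst => k _; rewrite inE.
have hu : \prod_(Z in xi) pX C hd (restr Z u) != 0.
  apply/prodf_neq0 => Z Zin.
  case: (eqVneq Z X) => [->|nZ].
    by apply: (@pX_neq0 _ _ _ _ _ _ true); apply: restr_ind_cst.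
  apply: (@pX_neq0 _ _ _ _ _ _ false); apply: restr_ind_cst => k kZ.
  move: (trivIsetP trivx Z X Zin Xin nZ).
  by rewrite -setI_eq0 => /eqP /setP /(_ k); rewrite !inE kZ.
by move: (mulf_neq0 hz hu); rewrite -e eqxx.
Qed.

Lemma chain_card (T : finType) (S U : {set T}) :
  (S \subset U \/ U \subset S) -> (#|S| <= #|U|)%N -> S \subset U.
Proof.
case=> // hUS hc.
have : U == S by rewrite eqEcard hUS hc.
by move/eqP => ->.
Qed.

Unset Implicit Arguments. Set Strict Implicit.
Theorem proposition5 (C : numClosedFieldType) (n : nat) (d : 'I_n -> nat)
  (hn : (1 <= n)%N) (hd : forall i, (1 < d i)%N)
  (PIIs : {set {set {set {set 'I_n}}}})
  (hPII : forall S, S \in PIIs -> in_PII S)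
  (hne : PIIs != set0)
  (hchain : forall S T, S \in PIIs -> T \in PIIs -> S \subset T \/ T \subset S)
  (Xi : {set {set {set {set 'I_n}}}})
  (hXisub : Xi \subset PIIs) (hXine : Xi != set0)
  (hXiup : forall S T, S \in Xi -> T \in PIIs -> S \subset T -> T \in Xi) :
  exists rho : basisL d -> basisL d -> C, C_unc PIIs Xi rho.
Proof.
case/set0Pn: hXine => i0 i0in.
case: (@arg_minnP _ i0 (mem Xi) (fun S => #|S|) i0in) => S0 S0in S0min.
have S0P : S0 \in PIIs by apply: (subsetP hXisub).
have hmin : forall T, T \in Xi -> S0 \subset T.
  move=> T Tin; apply: chain_card; last exact: S0min.
  by apply: hchain => //; apply: (subsetP hXisub).
have [xi xiS0 xinot] : exists2 xi, xi \in S0 &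
    (forall S', S' \in PIIs :\: Xi -> xi \notin S').
  have below : forall S', S' \in PIIs :\: Xi -> S' \subset S0.
    move=> S'; rewrite inE => /andP [nX S'P].
    case: (hchain S' S0 S'P S0P) => // h.
    by rewrite (hXiup S0 S' S0in S'P h) in nX.
  have [[k0 k0in]|K0] := set0Pn (PIIs :\: Xi); last first.
    have [_ [/set0Pn [xi xiin] _]] := hPII S0 S0P.
    by exists xi => // S' S'in; exfalso; apply: K0; exists S'.
  case: (@arg_maxnP _ k0 (mem (PIIs :\: Xi)) (fun S => #|S|) k0in) => S1 S1in S1max.
  have hmax : forall S', S' \in PIIs :\: Xi -> S' \subset S1.
    move=> S' S'in; apply: chain_card; last exact: S1max.
    move: S'in S1in; rewrite !inE => /andP [_ h1] /andP [_ h2].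
    exact: hchain.
  have S1S0 := below S1 S1in.
  have : ~~ (S0 \subset S1).
    apply/negP => h; have e : S0 = S1 by apply/eqP; rewrite eqEsubset h S1S0.
    by move: S1in; rewrite -e !inE => /andP [/negP].
  case/subsetPn => xi xiS0 xiS1.
  exists xi => // S' S'in; apply: contra xiS1; exact: (subsetP (hmax S' S'in)).
have [hpart _] := hPII S0 S0P.
have xip : is_partition xi := hpart xi xiS0.
exists (rhoL C hd xi); split; first exact: rhoL_density.
split.
  move=> S' S'in [ups upsin hunc].
  have S'P : S' \in PIIs by move: S'in; rewrite inE => /andP [].
  have [hp' [_ hdown]] := hPII S' S'P.
  have upsp : is_partition ups := hp' ups upsin.
  case hr: (refines xi ups).
    by move: (xinot S' S'in); rewrite (hdown ups xi upsin xip hr).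
  by apply: (not_unc xip upsp _ hunc); rewrite hr.
move=> S Sin; exists xi; first exact: (subsetP (hmin S Sin)).
exact: rhoL_unc.
Qed.
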